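(* Let $\mathcal A$ be a complex unital algebra which is purely infinite. Then $\mathcal A$ is (1) simple, i.e. its only two-sided ideals are $\{0\}$ and $\mathcal A$; and (2) properly infinite, i.e. there exist idempotents $p,q\in\mathcal A$ with $p\sim 1_{\mathcal A}$, $q\sim 1_{\mathcal A}$ and $p\perp q$.
   Context: A complex unital algebra $\mathcal A$ is purely infinite if it is not a division algebra and for every non-zero $a\in\mathcal A$ there exist $b,c\in\mathcal A$ with $bac=1_{\mathcal A}$. Two idempotents $p,q$ are (algebraically Murray–von Neumann) equivalent, $p\sim q$, if there exist $a,b\in\mathcal A$ with $p=ab$ and $q=ba$. Idempotents $p,q$ are orthogonal, $p\perp q$, if $pq=0=qp$. *)

(* Defs.v *)
From HB Require Import structures.
From mathcomp Require Import all_boot all_order all_algebra.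
From mathcomp Require Import reals.
From mathcomp Require Import complex.
Set Implicit Arguments. Unset Strict Implicit. Unset Printing Implicit Defensive.
Import Order.TTheory GRing.Theory Num.Theory.
Local Open Scope ring_scope.

(* Complex unital algebras: algType over R[i] = complex R for R : realType
   (every realType is a complete archimedean ordered field, i.e. a model of the reals). *)

Section Defs.
Variable (R : realType) (A : algType R[i]).

Definition is_division_algebra : Prop :=
  forall a : A, a != 0 -> exists b : A, a * b = 1 /\ b * a = 1.

Definition purely_infinite : Prop :=
  ~ is_division_algebra /\
  forall a : A, a != 0 -> exists b c : A, b * a * c = 1.

Definition two_sided_ideal (I : A -> Prop) : Prop :=
  [/\ I 0,
      (forall x y, I x -> I y -> I (x + y)),
      (forall (k : R[i]) x, I x -> I (k *: x)),
      (forall a x, I x -> I (a * x)) &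
      (forall a x, I x -> I (x * a))].

Definition simple_algebra : Prop :=
  forall I : A -> Prop, two_sided_ideal I ->
    (forall x, I x <-> x = 0) \/ (forall x, I x).

Definition idempotent (p : A) : Prop := p * p = p.

Definition mvn_equiv (p q : A) : Prop :=
  exists a b : A, p = a * b /\ q = b * a.

Definition orthogonal (p q : A) : Prop := p * q = 0 /\ q * p = 0.

Definition properly_infinite : Prop :=
  exists p q : A, [/\ idempotent p, idempotent q, mvn_equiv p 1,
                      mvn_equiv q 1 & orthogonal p q].
End Defs.

(* Main.v *)
Require Import Defs.
From HB Require Import structures.
From mathcomp Require Import all_boot all_order all_algebra.
From mathcomp Require Import reals.
From mathcomp Require Import complex.
From Stdlib Require Import Classical.
Import GRing.Theory.
Local Open Scope ring_scope.

Lemma exists_iso (R : realType) (A : algType R[i]) :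
  purely_infinite A -> exists u v : A, u * v = 1 /\ v * u != 1.
Proof.
move=> [nd pi].
have [a Ha] : exists a : A, ~ (a != 0 -> exists b : A, a * b = 1 /\ b * a = 1).
  by apply: not_all_ex_not.
have [anz ninv] := imply_to_and _ _ Ha.
have [b [c Hbac]] := pi a anz.
case: (eqVneq (c * (b * a)) 1) => [H1|H1]; last first.
  by exists (b * a), c; split => //; rewrite -mulrA.
case: (eqVneq ((a * c) * b) 1) => [H2|H2]; last first.
  by exists b, (a * c); split => //; rewrite mulrA.
exfalso; apply: ninv; exists (c * b); split.
  by rewrite mulrA.
by rewrite -mulrA.
Qed.

Theorem lemma1p2 (R : realType) (A : algType R[i]) :
  purely_infinite A -> simple_algebra A /\ properly_infinite A.
Proof.
move=> HP; split.
  move=> I [I0 ID IZ IL IR].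
  case: (classic (exists x, I x /\ x != 0)) => [[x [Ix xnz]]|H].
    right => y; have [b [c Hb]] := HP.2 x xnz.
    by rewrite -[y]mulr1 -Hb; apply IL; apply IR; apply IL.
  left => x; split => [Ix|->//].
  by apply: NNPP => nz; apply: H; exists x; split => //; apply/eqP.
have [u [v [uv vu]]] := @exists_iso R A HP.
set f := 1 - v * u.
have fnz : f != 0 by rewrite /f subr_eq0 eq_sym.
have [b [c Hb]] := HP.2 f fnz.
have uf : u * f = 0 by rewrite /f mulrBr mulr1 mulrA uv mul1r subrr.
have fv : f * v = 0 by rewrite /f mulrBl mul1r -mulrA uv mulr1 subrr.
have ff : f * f = f.
  by rewrite {1}/f mulrBl mul1r -mulrA uf mulr0 subr0.
clearbody f.
exists (v * u), ((f * c) * (b * f)); split.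
- by rewrite /Defs.idempotent mulrA -(mulrA v) uv mulr1.
- rewrite /Defs.idempotent !mulrA -(mulrA (f * c * b) f f) ff.
  rewrite -(mulrA (f * c) b f) -(mulrA (f * c) (b * f) c) Hb mulr1.
  by rewrite !mulrA.
- by exists v, u.
- exists (f * c), (b * f); split; first by [].
  by rewrite mulrA -(mulrA b f f) ff.
- split.
  + by rewrite !mulrA -(mulrA v u f) uf mulr0 !mul0r.
  + by rewrite !mulrA -(mulrA (f * c * b) f v) fv mulr0 !mul0r.
Qed.
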